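(* Let $\phi:\mathcal M_1\to\mathcal M_2$ be a homomorphism of local Moufang sets, with $\mathcal M_1=(X,(U_x))$, and let $\theta_x:U_x\to V_{x\phi}$ ($x\in X$) be the induced group homomorphisms. The following are equivalent: (i) $\phi$ is surjective; (ii) $\theta_x$ is surjective for all $x\in X$; (iii) $\theta_x$ is surjective for some $x\in X$.
   Context: Group actions are right actions; maps are composed left to right, so $u\phi$ means first $u$ then $\phi$. For $(X,\sim)$, $\overline x$ is the class of $x$, $\overline X$ the set of classes, $\mathrm{Sym}(X,\sim)$ the bijections $g$ with $x\sim y\iff xg\sim yg$, $\overline U$ the induced group on $\overline X$. A local Moufang set is $(X,\sim)$ with $|\overline X|>2$ and subgroups $U_x\le\mathrm{Sym}(X,\sim)$ ($x\in X$) with: (LM0) $x\sim y\Rightarrow\overline{U_x}=\overline{U_y}$; (LM1) $U_x$ fixes $x$ and is sharply transitive on $X\setminus\overline x$; (LM1') $\overline{U_x}$ fixes $\overline x$ and is sharply transitive on $\overline X\setminus\{\overline x\}$; (LM2) $U_x^g=U_{xg}$ for all $x$ and all $g\in\langle U_y\rangle$, where $g^h=h^{-1}gh$. A homomorphism $\mathcal M_1=(X,(U_x))\to\mathcal M_2=(Y,(V_y))$ is a map $\phi:X\to Y$ such that $x\sim x'\iff x\phi\sim x'\phi$ for all $x,x'\in X$, and $U_x\phi\subseteq\phi V_{x\phi}$ for all $x$. For each $x\in X$ the induced map $\theta_x:U_x\to V_{x\phi}$ is the unique map with $u\phi=\phi\,\theta_x(u)$ for all $u\in U_x$ (it exists and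 is a group homomorphism). *)

(* Defs.v *)
(* Maps act on the right in the paper; here a permutation is a function
   X -> X and "x g" is written (g x).  The product "g h" (first g, then h)
   is the function (fun z => h (g z)). *)
From Stdlib Require Import Classical FunctionalExtensionality.

Set Implicit Arguments.

Section Defs.
Variable X : Type.

Definition bij (f : X -> X) : Prop :=
  exists g : X -> X, (forall z, g (f z) = z) /\ (forall z, f (g z) = z).

Definition in_Sym (sim : X -> X -> Prop) (g : X -> X) : Prop :=
  bij g /\ forall x y, sim x y <-> sim (g x) (g y).

Definition is_subgroup (H : (X -> X) -> Prop) : Prop :=
  H (fun z => z) /\
  (forall g h, H g -> H h -> H (fun z => h (g z))) /\
  (forall g, H g -> exists g', H g' /\ (forall z, g' (g z) = z) /\ (forall z, g (g' z) = z)).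

Inductive gen (U : X -> (X -> X) -> Prop) : (X -> X) -> Prop :=
| gen_id : gen U (fun z => z)
| gen_U : forall y u, U y u -> gen U u
| gen_comp : forall g h, gen U g -> gen U h -> gen U (fun z => h (g z))
| gen_inv : forall g g', gen U g -> (forall z, g' (g z) = z) ->
            (forall z, g (g' z) = z) -> gen U g'.

End Defs.

Record LocalMoufangSet (X : Type) := {
  sim : X -> X -> Prop;
  U : X -> (X -> X) -> Prop;
  sim_equiv : (forall x, sim x x) /\ (forall x y, sim x y -> sim y x) /\
              (forall x y z, sim x y -> sim y z -> sim x z);
  three_classes : exists a b c : X, ~ sim a b /\ ~ sim a c /\ ~ sim b c;
  U_subgroup : forall x, is_subgroup (U x);
  U_in_Sym : forall x u, U x u -> in_Sym sim u;
  (* (LM0): x ~ y  ->  overline(U_x) = overline(U_y) as groups on X/~ *)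
  LM0 : forall x y, sim x y ->
        (forall u, U x u -> exists v, U y v /\ forall z, sim (u z) (v z)) /\
        (forall v, U y v -> exists u, U x u /\ forall z, sim (u z) (v z));
  LM1_fix : forall x u, U x u -> u x = x;
  LM1_trans : forall x y z, ~ sim x y -> ~ sim x z ->
              exists u, U x u /\ u y = z /\
                        forall u', U x u' -> u' y = z -> u' = u;
  (* (LM1'): overline(U_x) fixes class(x) and is sharply transitive on
     (X/~) \ {class(x)}; elements of overline(U_x) are the maps induced
     on classes, two u, u' inducing the same map iff u z ~ u' z for all z *)
  LM1'_fix : forall x u, U x u -> sim (u x) x;
  LM1'_trans : forall x y z, ~ sim x y -> ~ sim x z ->
              exists u, U x u /\ sim (u y) z /\
                        forall u', U x u' -> sim (u' y) z ->
                                   forall w, sim (u' w) (u w);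
  (* (LM2): U_x^g = U_{xg} for all g in <U_y | y in X>, where
     u^g = g^-1 u g, i.e. (z g) u^g = (z u) g *)
  LM2 : forall g, gen U g -> forall x w,
        U (g x) w <-> exists u, U x u /\ forall z, w (g z) = g (u z)
}.

Definition is_hom (X Y : Type) (M1 : LocalMoufangSet X) (M2 : LocalMoufangSet Y)
    (phi : X -> Y) : Prop :=
  (forall x x', sim M1 x x' <-> sim M2 (phi x) (phi x')) /\
  (forall x u, U M1 x u -> exists v, U M2 (phi x) v /\ forall z, phi (u z) = v (phi z)).

(* theta_x u = v, i.e. u phi = phi v with u in U_x, v in V_{x phi}
   (the induced map theta_x : U_x -> V_{x phi}, as its graph) *)
Definition theta (X Y : Type) (M1 : LocalMoufangSet X) (M2 : LocalMoufangSet Y)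
    (phi : X -> Y) (x : X) (u : X -> X) (v : Y -> Y) : Prop :=
  U M1 x u /\ U M2 (phi x) v /\ forall z, phi (u z) = v (phi z).

Definition theta_surjective (X Y : Type) (M1 : LocalMoufangSet X) (M2 : LocalMoufangSet Y)
    (phi : X -> Y) (x : X) : Prop :=
  forall v, U M2 (phi x) v -> exists u, theta M1 M2 phi x u v.

(* Main.v *)
Require Import Defs.
From Stdlib Require Import Classical.

Section S.
Variables (X Y : Type) (M1 : LocalMoufangSet X) (M2 : LocalMoufangSet Y)
    (phi : X -> Y) (hphi : is_hom M1 M2 phi).

Lemma symX : forall a b, sim M1 a b -> sim M1 b a.
Proof. destruct (sim_equiv M1) as [_ [H _]]; exact H. Qed.
Lemma trX : forall a b c, sim M1 a b -> sim M1 b c -> sim M1 a c.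
Proof. destruct (sim_equiv M1) as [_ [_ H]]; exact H. Qed.
Lemma reflY : forall a, sim M2 a a.
Proof. destruct (sim_equiv M2) as [H _]; exact H. Qed.
Lemma symY : forall a b, sim M2 a b -> sim M2 b a.
Proof. destruct (sim_equiv M2) as [_ [H _]]; exact H. Qed.
Lemma trY : forall a b c, sim M2 a b -> sim M2 b c -> sim M2 a c.
Proof. destruct (sim_equiv M2) as [_ [_ H]]; exact H. Qed.

Lemma transfer : forall x v a z, U M2 (phi x) v -> ~ sim M1 a x ->
  v (phi a) = phi z -> exists u, theta M1 M2 phi x u v.
Proof.
  intros x v a z Hv Hax Hz.
  destruct hphi as [Hs Hh].
  assert (Hnxa : ~ sim M2 (phi x) (phi a)).
  { intro H. apply Hax. apply symX. apply Hs. exact H. }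
  assert (Hnxz : ~ sim M2 (phi x) (phi z)).
  { intro H. apply Hnxa. destruct (U_in_Sym M2 _ _ Hv) as [_ Hiff].
    apply Hiff. rewrite (LM1_fix M2 _ _ Hv), Hz. exact H. }
  assert (Hnxz1 : ~ sim M1 x z). { intro H; apply Hnxz, Hs, H. }
  assert (Hnxa1 : ~ sim M1 x a). { intro H; apply Hnxa, Hs, H. }
  destruct (LM1_trans M1 x a z Hnxa1 Hnxz1) as [u [Hu [Hua _]]].
  destruct (Hh x u Hu) as [v' [Hv' Hc]].
  destruct (LM1_trans M2 (phi x) (phi a) (phi z) Hnxa Hnxz) as [w0 [Hw0 [_ Huniq]]].
  assert (E1 : v = w0) by (apply Huniq; auto).
  assert (E2 : v' = w0) by (apply Huniq; auto; rewrite <- Hc, Hua; reflexivity).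
  exists u. split; [exact Hu|split;[exact Hv|]].
  intro w. rewrite Hc, E1, <- E2. reflexivity.
Qed.

Lemma pick_avoid : forall b w, exists a, ~ sim M1 a b /\ ~ sim M2 (phi a) w.
Proof.
  intros b w. destruct hphi as [Hs _].
  destruct (three_classes M1) as [p [q [r [Hpq [Hpr Hqr]]]]].
  apply NNPP. intro Hn.
  assert (Hb : forall a, sim M1 a b \/ sim M2 (phi a) w).
  { intro a. apply NNPP. intro H. apply Hn. exists a. tauto. }
  assert (Kb : forall a c, sim M1 a b -> sim M1 c b -> sim M1 a c).
  { intros a c Ha Hc. apply trX with b; [exact Ha|apply symX, Hc]. }
  assert (Kw : forall a c, sim M2 (phi a) w -> sim M2 (phi c) w -> sim M1 a c).
  { intros a c Ha Hc. apply Hs. apply trY with w; [exact Ha|apply symY, Hc]. }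
  destruct (Hb p) as [H1|H1]; destruct (Hb q) as [H2|H2]; destruct (Hb r) as [H3|H3];
  eauto.
Qed.

Lemma surj_out : forall x, theta_surjective M1 M2 phi x ->
  forall y, ~ sim M2 y (phi x) -> exists z, phi z = y.
Proof.
  intros x Hth y Hy. destruct hphi as [Hs _].
  destruct (pick_avoid x (phi x)) as [a [Hax _]].
  assert (H1 : ~ sim M2 (phi x) (phi a)). { intro H; apply Hax, symX, Hs, H. }
  assert (H2 : ~ sim M2 (phi x) y). { intro H; apply Hy, symY, H. }
  destruct (LM1_trans M2 _ _ _ H1 H2) as [v [Hv [Hva _]]].
  destruct (Hth v Hv) as [u [_ [_ Hc]]].
  exists (u a). rewrite Hc. exact Hva.
Qed.

Lemma surj_other : forall x b, theta_surjective M1 M2 phi x -> ~ sim M1 b x ->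
  theta_surjective M1 M2 phi b.
Proof.
  intros x b Hth Hbx v Hv.
  destruct (U_in_Sym M2 _ _ Hv) as [[vi [Hvi1 Hvi2]] Hiff].
  destruct (pick_avoid b (vi (phi x))) as [a [Hab Haw]].
  assert (Hn : ~ sim M2 (v (phi a)) (phi x)).
  { intro H. apply Haw. apply Hiff. rewrite Hvi2. exact H. }
  destruct (surj_out x Hth _ Hn) as [z Hz].
  apply (transfer b v a z Hv Hab (eq_sym Hz)).
Qed.
End S.

Theorem mainTheorem10 (X Y : Type) (M1 : LocalMoufangSet X) (M2 : LocalMoufangSet Y)
    (phi : X -> Y) (hphi : is_hom M1 M2 phi) :
  ((forall y : Y, exists x : X, phi x = y) <-> (forall x : X, theta_surjective M1 M2 phi x)) /\
  ((forall x : X, theta_surjective M1 M2 phi x) <-> (exists x : X, theta_surjective M1 M2 phi x)).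
Proof.
  assert (Hiii : (exists x, theta_surjective M1 M2 phi x) -> forall y, exists x, phi x = y).
  { intros [x0 Hx0] y.
    destruct (classic (sim M2 y (phi x0))) as [Hy|Hy].
    - destruct (pick_avoid _ _ _ _ _ hphi x0 (phi x0)) as [b [Hbx _]].
      pose proof (surj_other _ _ _ _ _ hphi x0 b Hx0 Hbx) as Hb.
      apply (surj_out _ _ _ _ _ hphi b Hb). intro H. apply Hbx.
      destruct hphi as [Hs _]. apply Hs.
      apply (trY _ M2) with y; [apply (symY _ M2), H | exact Hy].
    - exact (surj_out _ _ _ _ _ hphi x0 Hx0 y Hy). }
  assert (Hii : (forall x, theta_surjective M1 M2 phi x) -> exists x, theta_surjective M1 M2 phi x).
  { intro H. destruct (three_classes M1) as [p _]. exists p. apply H. }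
  assert (Hi : (forall y, exists x, phi x = y) -> forall x, theta_surjective M1 M2 phi x).
  { intros Hsurj x v Hv.
    destruct (pick_avoid _ _ _ _ _ hphi x (phi x)) as [a [Hax _]].
    destruct (Hsurj (v (phi a))) as [z Hz].
    exact (transfer _ _ _ _ _ hphi x v a z Hv Hax (eq_sym Hz)). }
  split; split; auto.
Qed.
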